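(* Let $\mathcal{H}$ be a complex linear space with a non-degenerate indefinite inner product $[\cdot,\cdot]$, and let $\mathcal{F}_{++}=\{f\in\mathcal{H}:[f,f]>0\}$. Let $W$ be a linear operator defined on $\mathcal{F}_{++}$ which maps $\mathcal{F}_{++}$ onto $\mathcal{F}_{++}$ in a one-to-one manner. Then the (unique) linear extension of $W$ to $\mathcal{H}$ is a bijection of $\mathcal{H}$ onto itself, and $$[Wf,Wg]=\theta[f,g]\quad\text{for all } f,g\in\mathcal{H},\qquad\text{where}\quad \theta=\inf_{f\in\mathcal{F}_{++}}\frac{[Wf,Wf]}{[f,f]}>0.$$
   Context: An indefinite inner product on a complex linear space $\mathcal{H}$ is a Hermitian sesquilinear form $[\cdot,\cdot]$ (linear in the second argument) for which there exist vectors $f,g$ with $[f,f]>0$ and $[g,g]<0$; it is non-degenerate if $[f,g]=0$ for all $g$ implies $f=0$. An operator $W:\mathcal{F}_{++}\to\mathcal{H}$ is linear (on $\mathcal{F}_{++}$) if $W(cf)=cWf$ for $f\in\mathcal{F}_{++}$, nonzero $c\in\mathbb{C}$, and $W(f+g)=Wf+Wg$ whenever $f,g,f+g\in\mathcal{F}_{++}$. Such a $W$ extends uniquely to a linear operator on all of $\mathcal{H}$ (every vector is a sum of two positive vectors). *)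

(* Defs.v *)
From HB Require Import structures.
From mathcomp Require Import all_boot all_order all_algebra.
From mathcomp Require Import complex.
From mathcomp Require Import boolp classical_sets reals.
Set Implicit Arguments. Unset Strict Implicit. Unset Printing Implicit Defensive.
Import Order.TTheory GRing.Theory Num.Theory.
Local Open Scope ring_scope.
Local Open Scope complex_scope.

Definition herm_sesq_form (R : rcfType) (H : lmodType R[i])
    (ip : H -> H -> R[i]) : Prop :=
  (forall (a : R[i]) (f g h : H), ip f (a *: g + h) = a * ip f g + ip f h) /\
  (forall f g : H, ip g f = (ip f g)^*).

Definition indef_form (R : rcfType) (H : lmodType R[i]) (ip : H -> H -> R[i]) : Prop :=
  (exists f : H, 0 < ip f f) /\ (exists g : H, ip g g < 0).

Definition nondeg_form (R : rcfType) (H : lmodType R[i]) (ip : H -> H -> R[i]) : Prop :=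
  forall f : H, (forall g : H, ip f g = 0) -> f = 0.

Definition Fpp (R : rcfType) (H : lmodType R[i]) (ip : H -> H -> R[i]) : set H :=
  [set f | 0 < ip f f].

Definition linear_on_Fpp (R : rcfType) (H : lmodType R[i]) (ip : H -> H -> R[i])
    (W : H -> H) : Prop :=
  (forall (c : R[i]) (f : H), Fpp ip f -> c != 0 -> W (c *: f) = c *: W f) /\
  (forall f g : H, Fpp ip f -> Fpp ip g -> Fpp ip (f + g) -> W (f + g) = W f + W g).

Definition lin_map (R : rcfType) (H : lmodType R[i]) (L : H -> H) : Prop :=
  forall (a : R[i]) (u v : H), L (a *: u + v) = a *: L u + L v.

(* theta = inf_{f in F_{++}} [Wf,Wf]/[f,f]  (the quotient is a positive real;
   we take its real part to view it in R) *)
Definition theta_W (R : realType) (H : lmodType R[i]) (ip : H -> H -> R[i])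
    (W : H -> H) : R :=
  inf [set complex.Re (ip (W f) (W f) / ip f f) | f in Fpp ip].

(* Main.v *)
Require Import Defs.
From HB Require Import structures.
From mathcomp Require Import all_boot all_order all_algebra.
From mathcomp Require Import complex.
From mathcomp Require Import boolp classical_sets reals.
From mathcomp Require Import ring lra.
Import Order.TTheory GRing.Theory Num.Theory.
Set Implicit Arguments. Unset Strict Implicit. Unset Printing Implicit Defensive.
Local Open Scope ring_scope.
Local Open Scope complex_scope.

Lemma quad_ev (R : realType) (a b c : R) : 0 < a ->
  exists T : R, 1 <= T /\ forall t, T <= t -> 0 < c + b * t + a * t ^+ 2.
Proof.
move=> ha; exists (1 + (`|b| + `|c|) / a); split.
  rewrite lerDl divr_ge0 // ?addr_ge0 //; exact: ltW.
move=> t ht.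
have hb : - b <= `|b| by rewrite -normrN ler_norm.
have hc : - c <= `|c| by rewrite -normrN ler_norm.
have h1 : a * (1 + (`|b| + `|c|) / a) = a + `|b| + `|c|.
  by rewrite mulrDr mulr1 mulrCA mulfV ?mulr1 ?addrA // gt_eqF.
have hb0 : 0 <= `|b| by [].
have hc0 : 0 <= `|c| by [].
have hT1 : 1 <= 1 + (`|b| + `|c|) / a.
  rewrite lerDl divr_ge0 // ?addr_ge0 //; exact: ltW.
set T := 1 + _ / _ in ht hT1 h1 *.
have ht1 : 1 <= t by apply: le_trans ht.
have hat : 0 <= a * t by rewrite mulr_ge0 ?ltW //; lra.
have : 0 <= (a * t) * (t - T) by rewrite mulr_ge0 // subr_ge0.
have e1 : a * T * t = (a + `|b| + `|c|) * t by rewrite h1.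
have e2 : 0 <= (b + `|b|) * t by rewrite mulr_ge0 //; lra.
have e3 : 0 <= `|c| * (t - 1) by rewrite mulr_ge0 //; lra.
have e4 : 0 < a * t by rewrite mulr_gt0 //; lra.
move=> e0; rewrite expr2.
have -> : a * (t * t) = (a * t) * (t - T) + a * T * t by ring.
rewrite e1. nra.
Qed.

Lemma eps_lem (R : realType) (al be ga : R) :
  (forall u, 0 < u -> 0 < al + be * u + ga * u ^+ 2) -> 0 <= al.
Proof.
move=> H; rewrite leNgt; apply/negP => hal.
set d := - al. set M := `|be| + `|ga| + 1.
have hd : 0 < d by rewrite /d oppr_gt0.
have hM : 0 < M by rewrite /M ltr_wpDl // addr_ge0.
set u := d / (2 * (d + M)).
have hu : 0 < u by rewrite /u divr_gt0 // mulr_gt0 // addr_gt0.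
have hu1 : 2 * (d + M) * u = d by rewrite /u mulrCA mulfV ?mulr1 // gt_eqF // mulr_gt0 // addr_gt0.
have hb : be * u <= `|be| * u by apply: ler_wpM2r; [exact: ltW | exact: ler_norm].
have hg : ga * u ^+ 2 <= `|ga| * u ^+ 2 by apply: ler_wpM2r; [exact: exprn_ge0 (ltW hu) | exact: ler_norm].
have hu2 : u <= 1 by nra.
have hg2 : `|ga| * u ^+ 2 <= `|ga| * u by rewrite ler_wpM2l // expr2 ger_pMl //.
have := H u hu. rewrite /d in hu1 hd. rewrite /M in hu1. nra.
Qed.

Lemma quad_roots (R : realType) (a b c : R) : 0 < a -> c < 0 ->
  exists t1 t2 : R, t1 != t2 /\ c + b * t1 + a * t1 ^+ 2 = 0 /\ c + b * t2 + a * t2 ^+ 2 = 0.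
Proof.
move=> ha hc.
set D := b ^+ 2 - 4 * a * c.
have hD : 0 < D by rewrite /D; nra.
set s := Num.sqrt D.
have hs : 0 < s by rewrite /s sqrtr_gt0.
have hs2 : s ^+ 2 = D by rewrite /s sqr_sqrtr // ltW.
have ha0 : a != 0 by rewrite gt_eqF.
exists ((- b + s) / (2 * a)), ((- b - s) / (2 * a)); split; last split.
- apply/negP => /eqP h.
  have : (- b + s) = (- b - s).
    by rewrite -[LHS](@divfK _ (2 * a)) ?h ?divfK // mulf_neq0 // pnatr_eq0.
  lra.
- set t := (- b + s) / (2 * a).
  have ht : 2 * a * t = - b + s by rewrite /t mulrC divfK // mulf_neq0 // pnatr_eq0.
  have : 4 * a * (c + b * t + a * t ^+ 2) = 0.
    have -> : 4 * a * (c + b * t + a * t ^+ 2) = 4 * a * c + 2 * b * (2 * a * t) + (2 * a * t) ^+ 2 by ring.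
    rewrite ht; have -> : (- b + s) ^+ 2 = b ^+ 2 - 2 * b * s + s ^+ 2 by ring.
    rewrite hs2 /D; ring.
  move/eqP; rewrite mulf_eq0 mulf_eq0 pnatr_eq0 (negPf ha0) /= => /eqP //.
- set t := (- b - s) / (2 * a).
  have ht : 2 * a * t = - b - s by rewrite /t mulrC divfK // mulf_neq0 // pnatr_eq0.
  have : 4 * a * (c + b * t + a * t ^+ 2) = 0.
    have -> : 4 * a * (c + b * t + a * t ^+ 2) = 4 * a * c + 2 * b * (2 * a * t) + (2 * a * t) ^+ 2 by ring.
    rewrite ht; have -> : (- b - s) ^+ 2 = b ^+ 2 + 2 * b * s + s ^+ 2 by ring.
    rewrite hs2 /D; ring.
  move/eqP; rewrite mulf_eq0 mulf_eq0 pnatr_eq0 (negPf ha0) /= => /eqP //.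
Qed.

Section Form.
Variables (R : realType) (H : lmodType R[i]) (ip : H -> H -> R[i]).
Hypothesis hs : herm_sesq_form ip.

Lemma ip0r f : ip f 0 = 0.
Proof.
have := hs.1 1 f 0 0; rewrite scale1r addr0 mul1r => h.
by apply: (addrI (ip f 0)); rewrite addr0 -h.
Qed.
Lemma ipDr f g h : ip f (g + h) = ip f g + ip f h.
Proof. by have := hs.1 1 f g h; rewrite scale1r mul1r. Qed.
Lemma ipZr f a g : ip f (a *: g) = a * ip f g.
Proof. by have := hs.1 a f g 0; rewrite addr0 ip0r addr0. Qed.
Lemma ipC f g : ip g f = (ip f g)^*.
Proof. exact: hs.2. Qed.
Lemma ipDl f g h : ip (f + g) h = ip f h + ip g h.
Proof. by rewrite ipC ipDr rmorphD /= -!ipC. Qed.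
Lemma ipZl a f g : ip (a *: f) g = a^* * ip f g.
Proof. by rewrite ipC ipZr rmorphM /= -ipC. Qed.
Lemma ipNr f g : ip f (- g) = - ip f g.
Proof. by rewrite -scaleN1r ipZr mulN1r. Qed.
Lemma ipNl f g : ip (- f) g = - ip f g.
Proof. by rewrite ipC ipNr rmorphN /= -ipC. Qed.
Lemma ip0l f : ip 0 f = 0.
Proof. by rewrite ipC ip0r conjc0. Qed.

Lemma Im_ipff f : complex.Im (ip f f) = 0.
Proof.
have := ipC f f; case: (ip f f) => a b /(congr1 (@complex.Im _)) /= h.
lra.
Qed.

Definition B f g := complex.Re (ip f g).

Lemma ReMr (t : R) (z : R[i]) : complex.Re (t%:C * z) = t * complex.Re z.
Proof. by case: z => a b /=; rewrite mul0r subr0. Qed.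
Lemma ImMr (t : R) (z : R[i]) : complex.Im (t%:C * z) = t * complex.Im z.
Proof. by case: z => a b /=; rewrite mul0r addr0. Qed.

Lemma BC f g : B g f = B f g.
Proof. by rewrite /B ipC; case: (ip f g) => a b. Qed.
Lemma BDr f g h : B f (g + h) = B f g + B f h.
Proof. by rewrite /B ipDr; case: (ip f g) (ip f h) => a b [c d]. Qed.
Lemma BDl f g h : B (f + g) h = B f h + B g h.
Proof. by rewrite /B ipDl; case: (ip f h) (ip g h) => a b [c d]. Qed.
Lemma BZr f (t : R) g : B f (t%:C *: g) = t * B f g.
Proof. by rewrite /B ipZr ReMr. Qed.
Lemma BZl (t : R) f g : B (t%:C *: f) g = t * B f g.
Proof. by rewrite BC BZr BC. Qed.
Lemma BNr f g : B f (- g) = - B f g.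
Proof. by rewrite /B ipNr; case: (ip f g) => a b. Qed.

Lemma FppE f : Fpp ip f <-> 0 < B f f.
Proof.
rewrite /Fpp /B /=; have := Im_ipff f; case: (ip f f) => a b /= ->.
by rewrite ltcE /= eqxx.
Qed.

Lemma Qexp f (t : R) g :
  B (f + t%:C *: g) (f + t%:C *: g) = B f f + 2 * t * B f g + t ^+ 2 * B g g.
Proof. rewrite !BDl !BDr !BZl !BZr (BC g f); ring. Qed.

Lemma Im_B f g : complex.Im (ip f g) = - B f ('i *: g).
Proof. by rewrite /B ipZr; case: (ip f g) => a b /=; rewrite !mul0r !mul1r; ring. Qed.

Lemma QZ c f : B (c *: f) (c *: f) = (complex.Re c ^+ 2 + complex.Im c ^+ 2) * B f f.
Proof.
rewrite /B ipZl ipZr; have := Im_ipff f; case: (ip f f) => a b /= ->.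
case: c => x y /=; ring.
Qed.

Lemma Bconj f p : B f ((ip f p)^* *: p) =
  complex.Re (ip f p) ^+ 2 + complex.Im (ip f p) ^+ 2.
Proof. rewrite /B ipZr; case: (ip f p) => x y /=; ring. Qed.

Lemma normc_gt0 (c : R[i]) : c != 0 -> 0 < complex.Re c ^+ 2 + complex.Im c ^+ 2.
Proof.
case: c => x y hc; rewrite ltNge; apply/negP => hle.
have h0 : x ^+ 2 + y ^+ 2 = 0 by apply/le_anti; rewrite hle addr_ge0 // sqr_ge0.
move/eqP: h0; rewrite paddr_eq0 ?sqr_ge0 // !sqrf_eq0 => /andP [/eqP hx /eqP hy].
by move: hc; rewrite hx hy eqxx.
Qed.

Lemma FppZ c f : c != 0 -> Fpp ip f -> Fpp ip (c *: f).
Proof. by move=> hc /FppE hf; apply/FppE; rewrite QZ mulr_gt0 // normc_gt0. Qed.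

Lemma B0r f : B f 0 = 0.
Proof. by rewrite /B ip0r. Qed.
Lemma B0l f : B 0 f = 0.
Proof. by rewrite /B ip0l. Qed.

End Form.

Lemma complex_eqRI (R : realType) (x y : R[i]) :
  complex.Re x = complex.Re y -> complex.Im x = complex.Im y -> x = y.
Proof. by case: x => a b; case: y => c d /= -> ->. Qed.

Section Main.
Variables (R : realType) (H : lmodType R[i]) (ip : H -> H -> R[i]) (W : H -> H).
Hypothesis hs : herm_sesq_form ip.
Hypothesis hnd : nondeg_form ip.
Hypothesis hlin : linear_on_Fpp ip W.
Hypothesis hmap : forall f, Fpp ip f -> Fpp ip (W f).
Hypothesis hinj : {in Fpp ip &, injective W}.
Hypothesis hsurj : forall g, Fpp ip g -> exists2 f, Fpp ip f & W f = g.
Variables (p0 n0 : H).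
Hypothesis hp0 : Fpp ip p0.
Hypothesis hn0 : 0 < - B ip n0 n0.

Local Notation B := (B ip).
Local Notation Fpp := (Fpp ip).

Lemma thr h : exists T : R, 1 <= T /\ forall t, T <= t -> Fpp (h + t%:C *: p0).
Proof.
have [T [hT1 hT]] := quad_ev (2 * B h p0) (B h h) (proj1 (FppE hs p0) hp0).
exists T; split => // t ht; apply/(FppE hs); rewrite Qexp //.
have -> : 2 * t * B h p0 = 2 * B h p0 * t by ring.
rewrite [t ^+ 2 * _]mulrC; exact: hT.
Qed.

Definition T h := proj1_sig (cid (thr h)).
Lemma T1 h : 1 <= T h.
Proof. exact: (proj1 (proj2_sig (cid (thr h)))). Qed.
Lemma TP h t : T h <= t -> Fpp (h + t%:C *: p0).
Proof. exact: (proj2 (proj2_sig (cid (thr h))) t). Qed.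

Definition L h := W (h + (T h)%:C *: p0) - W ((T h)%:C *: p0).

Lemma Fpp_tp0 t : 0 < t -> Fpp (t%:C *: p0).
Proof.
move=> ht; apply/(FppE hs); rewrite QZ //= expr0n /= addr0 mulr_gt0 ?exprn_gt0 //.
exact/(FppE hs).
Qed.

Lemma WD f g : Fpp f -> Fpp g -> Fpp (f + g) -> W (f + g) = W f + W g.
Proof. exact: hlin.2. Qed.

Lemma scaleCD (s t : R) (v : H) : (s + t)%:C *: v = s%:C *: v + t%:C *: v.
Proof. by rewrite rmorphD /= scalerDl. Qed.

Lemma zswap (V : zmodType) (a b c d : V) : a + b = c + d -> c - b = a - d.
Proof. by move=> e; apply/eqP; rewrite subr_eq eq_sym addrAC e addrK. Qed.

Lemma LE h t : T h <= t -> L h = W (h + t%:C *: p0) - W (t%:C *: p0).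
Proof.
move=> ht; rewrite /L.
set t0 := T h.
have ht0 : 1 <= t0 := T1 h.
have htp : 0 < t by apply: lt_le_trans ht; apply: lt_le_trans ht0.
have hs0 : Fpp (h + (t0 + t)%:C *: p0) by apply: TP; rewrite /t0 lerDl; lra.
have e1 : W (h + t0%:C *: p0 + t%:C *: p0) = W (h + t0%:C *: p0) + W (t%:C *: p0).
  apply: WD; [exact: (TP (le_refl _)) | exact: (Fpp_tp0 htp) |]; by rewrite -addrA -scaleCD.
have e2 : W (h + t%:C *: p0 + t0%:C *: p0) = W (h + t%:C *: p0) + W (t0%:C *: p0).
  apply: WD; [exact: (TP ht) | apply: Fpp_tp0; lra |]; by rewrite -addrA -scaleCD (addrC t).
have e3 : h + t0%:C *: p0 + t%:C *: p0 = h + t%:C *: p0 + t0%:C *: p0 by rewrite addrAC.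
rewrite e3 e2 in e1.
exact: zswap.
Qed.

Lemma L_W f : Fpp f -> L f = W f.
Proof.
move=> hf; have ht := T1 f.
have f1 : Fpp (f + (T f)%:C *: p0) by apply: TP.
have f2 : Fpp ((T f)%:C *: p0) by apply: Fpp_tp0; lra.
by rewrite (LE (le_refl _)) WD ?addrK.
Qed.

Lemma LD h k : L (h + k) = L h + L k.
Proof.
set t := T h + T k + T (h + k).
have h1 := T1 h; have h2 := T1 k; have h3 := T1 (h + k).
have th : T h <= t by rewrite /t; lra.
have tk : T k <= t by rewrite /t; lra.
have thk : T (h + k) <= t + t by rewrite /t; lra.
have tp : 0 < t by lra.
clearbody t.
rewrite (LE thk) (LE th) (LE tk) !scaleCD.
have -> : h + k + (t%:C *: p0 + t%:C *: p0) = (h + t%:C *: p0) + (k + t%:C *: p0).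
  by rewrite addrACA.
rewrite WD; first last.
- by rewrite -addrACA -scaleCD; apply: TP.
- exact: TP.
- exact: TP.
rewrite [W (t%:C *: p0 + t%:C *: p0)]WD; first last.
- by rewrite -scaleCD; apply: Fpp_tp0; lra.
- exact: Fpp_tp0.
- exact: Fpp_tp0.
by rewrite opprD addrACA.
Qed.

Lemma L0 : L 0 = 0.
Proof. by apply: (addrI (L 0)); rewrite -LD !addr0. Qed.

Lemma LN h : L (- h) = - L h.
Proof. by apply: (addrI (L h)); rewrite -LD !subrr L0. Qed.

Lemma LB h k : L (h - k) = L h - L k.
Proof. by rewrite LD LN. Qed.

Lemma LZ a h : L (a *: h) = a *: L h.
Proof.
have [->|ha] := eqVneq a 0; first by rewrite !scale0r L0.
set t := T h.
have ht : 1 <= t := T1 h.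
have f1 : Fpp (h + t%:C *: p0) by apply: TP.
have f2 : Fpp (t%:C *: p0) by apply: Fpp_tp0; lra.
have eh : h = (h + t%:C *: p0) - t%:C *: p0 by rewrite addrK.
rewrite [in LHS]eh scalerBr LB (L_W (FppZ hs ha f1)) (L_W (FppZ hs ha f2)) (hlin.1 a _ f1 ha) (hlin.1 a _ f2 ha).
by rewrite -scalerBr -(L_W f1) -(L_W f2) -LB -eh.
Qed.

Lemma Llin : lin_map L.
Proof. by move=> a u v; rewrite LD LZ. Qed.

Lemma L_uniq (L' : H -> H) : lin_map L' -> (forall f, Fpp f -> L' f = W f) ->
  forall f, L' f = L f.
Proof.
move=> hl hw f.
have L'D u v : L' (u + v) = L' u + L' v by have := hl 1 u v; rewrite !scale1r.
have L'0 : L' 0 = 0 by apply: (addrI (L' 0)); rewrite -L'D !addr0.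
have L'N u : L' (- u) = - L' u by apply: (addrI (L' u)); rewrite -L'D !subrr L'0.
set t := T f.
have ht : 1 <= t := T1 f.
have f1 : Fpp (f + t%:C *: p0) by apply: TP.
have f2 : Fpp (t%:C *: p0) by apply: Fpp_tp0; lra.
rewrite (LE (le_refl _)) -!hw // -L'N -L'D.
by rewrite addrK.
Qed.

Lemma L_inj0 h : L h = 0 -> h = 0.
Proof.
set t := T h.
have ht : 1 <= t := T1 h.
have f1 : Fpp (h + t%:C *: p0) by apply: TP.
have f2 : Fpp (t%:C *: p0) by apply: Fpp_tp0; lra.
rewrite (LE (le_refl _)) => /eqP; rewrite subr_eq0 => /eqP e.
have := hinj (mem_set f1) (mem_set f2) e.
by move=> e'; rewrite -[h](addrK (t%:C *: p0)) e' subrr.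
Qed.

Lemma L_inj : injective L.
Proof. by move=> a b e; apply/eqP; rewrite -subr_eq0; apply/eqP/L_inj0; rewrite LB e subrr. Qed.

Lemma L_surj g : exists h, L h = g.
Proof.
set t := T g.
have ht : 1 <= t := T1 g.
have f1 : Fpp (g + t%:C *: p0) by apply: TP.
have f2 : Fpp (t%:C *: p0) by apply: Fpp_tp0; lra.
have [x hx ex] := hsurj f1.
have [y hy ey] := hsurj f2.
exists (x - y); rewrite LB !L_W // ex ey.
by rewrite addrK.
Qed.

Lemma L_Fpp f : Fpp f -> Fpp (L f).
Proof. by move=> hf; rewrite L_W //; apply: hmap. Qed.

Lemma Fpp_L f : Fpp (L f) -> Fpp f.
Proof.
move=> hf; have [g hg eg] := hsurj hf.
rewrite -L_W // in eg.
by rewrite -(L_inj eg).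
Qed.

Lemma L_comb f (u : R) g : L (f + u%:C *: g) = L f + u%:C *: L g.
Proof. by rewrite LD LZ. Qed.

Lemma neutral f : B f f = 0 -> B (L f) (L f) = 0.
Proof.
move=> hf0; apply/le_anti/andP; split.
  rewrite leNgt; apply/negP => hpos.
  have := Fpp_L (proj2 (FppE hs _) hpos) => /(FppE hs).
  by rewrite hf0 ltxx.
have [->|fn0] := eqVneq f 0; first by rewrite L0 B0r.
have [g hg] : exists g, ip f g != 0.
  apply: contrapT => hno; apply: (negP fn0); apply/eqP/hnd => g.
  apply/eqP; apply: contrapT => hne; apply: hno; exists g; exact/negP.
have [p [hp hpz]] : exists p, Fpp p /\ ip f p != 0.
  set t := T g.
  have ht : 1 <= t := T1 g.
  have f1 : Fpp (g + t%:C *: p0) by apply: TP.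
  have f2 : Fpp (t%:C *: p0) by apply: Fpp_tp0; lra.
  have [e1|n1] := eqVneq (ip f (g + t%:C *: p0)) 0; last by exists (g + t%:C *: p0).
  have [e2|n2] := eqVneq (ip f (t%:C *: p0)) 0; last by exists (t%:C *: p0).
  move: hg; rewrite -[g](addrK (t%:C *: p0)) (ipDr hs) (ipNr hs) e1 e2 subrr eqxx //.
set z := ip f p.
set p' := z^* *: p.
have hz : z^* != 0 by rewrite conjc_eq0.
have hp' : Fpp p' by apply: FppZ.
have hbe : 0 < B f p' by rewrite /p' Bconj //; exact: normc_gt0.
have hga : 0 < B p' p' by apply/(FppE hs).
apply: (@eps_lem _ _ (2 * B (L f) (L p')) (B (L p') (L p'))) => u hu.
have hfu : Fpp (f + u%:C *: p') by apply/(FppE hs); rewrite Qexp // hf0; nra.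
have := L_Fpp hfu; rewrite L_comb => /(FppE hs); rewrite Qexp //.
have -> : 2 * u * B (L f) (L p') = 2 * B (L f) (L p') * u by ring.
by rewrite [u ^+ 2 * _]mulrC.
Qed.

Definition cst := B (L p0) (L p0) / B p0 p0.
Definition D f := B (L f) (L f) - cst * B f f.
Definition E f g := B (L f) (L g) - cst * B f g.

Lemma Dexp f (t : R) g : D (f + t%:C *: g) = D f + 2 * t * E f g + t ^+ 2 * D g.
Proof. by rewrite /D /E L_comb !Qexp //; ring. Qed.

Lemma Bp0 : 0 < B p0 p0.
Proof. exact/(FppE hs). Qed.

Lemma Dp0 : D p0 = 0.
Proof. by rewrite /D /cst divfK ?subrr // gt_eqF // Bp0. Qed.

Lemma Dneg f : B f f < 0 -> D f = 0.
Proof.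
move=> hf.
have [t1 [t2 [hne [r1 r2]]]] := quad_roots (2 * B f p0) Bp0 hf.
have root t : B f f + 2 * B f p0 * t + B p0 p0 * t ^+ 2 = 0 -> D f + 2 * t * E f p0 = 0.
  move=> r; have := Dexp f t p0; rewrite Dp0 mulr0 addr0 => <-.
  have hq : B (f + t%:C *: p0) (f + t%:C *: p0) = 0.
    by rewrite Qexp // -r; ring.
  by rewrite /D hq (neutral hq) mulr0 subrr.
have e1 := root _ r1; have e2 := root _ r2.
have : (t1 - t2) * (2 * E f p0) = 0.
  have -> : (t1 - t2) * (2 * E f p0) = (D f + 2 * t1 * E f p0) - (D f + 2 * t2 * E f p0) by ring.
  by rewrite e1 e2 subrr.
move/eqP; rewrite mulf_eq0 subr_eq0 (negPf hne) /= mulf_eq0 pnatr_eq0 /= => /eqP hE.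
by move: e1; rewrite hE mulr0 addr0.
Qed.

Lemma Dall f : D f = 0.
Proof.
have Dn0 : D n0 = 0 by apply: Dneg; rewrite -oppr_gt0.
have [S [hS1 hS]] := quad_ev (- (2 * B f n0)) (- B f f) hn0.
have root s : S <= s -> D f + 2 * s * E f n0 = 0.
  move=> hs'; have := Dexp f s n0; rewrite Dn0 mulr0 addr0 => <-.
  apply: Dneg; rewrite Qexp //; have := hS s hs'; nra.
have e1 := root S (le_refl _).
have e2 : D f + 2 * (S + 1) * E f n0 = 0 by apply: root; lra.
have hE : E f n0 = 0.
  have : 2 * E f n0 = (D f + 2 * (S + 1) * E f n0) - (D f + 2 * S * E f n0) by ring.
  rewrite e1 e2 subrr => /eqP; rewrite mulf_eq0 pnatr_eq0 /= => /eqP //.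
by move: e1; rewrite hE mulr0 addr0.
Qed.

Lemma Eall f g : E f g = 0.
Proof.
have := Dexp f 1 g; rewrite !Dall.
rewrite expr1n mulr0 addr0 add0r mulr1 => /esym/eqP; rewrite mulf_eq0 pnatr_eq0 /= => /eqP //.
Qed.

Lemma ipL f g : ip (L f) (L g) = cst%:C * ip f g.
Proof.
have hB u v : B (L u) (L v) = cst * B u v by apply/eqP; rewrite -subr_eq0; apply/eqP; exact: Eall.
apply: complex_eqRI.
  by rewrite ReMr; exact: hB.
rewrite ImMr !(Im_B hs) -LZ hB; ring.
Qed.

Lemma cst_gt0 : 0 < cst.
Proof. by rewrite /cst divr_gt0 ?Bp0 //; apply/(FppE hs)/L_Fpp. Qed.

End Main.

Unset Implicit Arguments.

Theorem theorem2p3 (R : realType) (H : lmodType R[i]) (ip : H -> H -> R[i])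
  (W : H -> H) :
  herm_sesq_form ip -> indef_form ip -> nondeg_form ip ->
  linear_on_Fpp ip W ->
  (forall f, Fpp ip f -> Fpp ip (W f)) ->
  {in Fpp ip &, injective W} ->
  (forall g, Fpp ip g -> exists2 f, Fpp ip f & W f = g) ->
  exists L : H -> H,
    [/\ lin_map L,
        (forall f, Fpp ip f -> L f = W f),
        (forall L' : H -> H, lin_map L' -> (forall f, Fpp ip f -> L' f = W f) ->
           forall f, L' f = L f),
        bijective L
      & 0 < theta_W ip W /\ forall f g : H, ip (L f) (L g) = (theta_W ip W)%:C * ip f g].
Proof.
move=> hs [[p0 hp0] [n0 hn0]] hnd hlin hmap hinj hsurj.
have hp0' : Fpp ip p0 by [].
have hn0' : 0 < - B ip n0 n0.
  move: hn0; have := Im_ipff hs n0; rewrite /B; case: (ip n0 n0) => a b /= ->.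
  by rewrite ltcE /= eqxx /= oppr_gt0.
set L := L W hs hp0'.
have htheta : theta_W ip W = cst W hs hp0'.
  rewrite /theta_W.
  suff -> : [set complex.Re (ip (W f) (W f) / ip f f) | f in Fpp ip]%classic = [set cst W hs hp0']%classic.
    exact: inf1.
  apply/seteqP; split => x /=.
    case=> f hf <-.
    rewrite -(L_W hs hlin hp0' hf) (ipL hs hnd hlin hmap hinj hsurj hp0' hn0') mulfK.
      by [].
    by move: hf; rewrite /Fpp /= => /gt_eqF ->.
  move=> ->; exists p0 => //.
  rewrite -(L_W hs hlin hp0' hp0') (ipL hs hnd hlin hmap hinj hsurj hp0' hn0') mulfK //.
  by have := hp0'; rewrite /Fpp /= => /gt_eqF ->.
exists L; split.
- exact: Llin.
- by move=> f hf; apply: L_W.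
- by move=> L' hl hw f; apply: L_uniq.
- have [Li hLi] := choice (L_surj hs hlin hsurj hp0').
  exists Li => x; last exact: hLi.
  by apply: (@L_inj _ _ _ _ hs hlin hinj _ hp0'); rewrite hLi.
- rewrite htheta; split; first exact: cst_gt0.
  exact: (ipL hs hnd hlin hmap hinj hsurj hp0' hn0').
Qed.
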